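(* Let $L$ be an interval locale and $A:J\to\mathbf{Mon}(L_{+})$ a small diagram. Then $X=L(\operatorname{Im}(\varinjlim_{j\in J}A(j)))$ (colimit formed in presheaves) is the colimit of $A$ in $\mathbf{Mon}(L_{+})$, and for every $x\in X(i)$, $$\psi_X(x)=\bigvee_{(j,y)}\psi_{A(j)}(y),$$ where the join ranges over all pairs $(j,y)$ with $j\in J$ and $y\in A(j)(s)$ for some $s\in L$ such that $y\mapsto x$ under the composite $A(j)(s)\to\varinjlim_j A(j)(s)\to\operatorname{Im}(\varinjlim_j A(j))(s)\to X(i)$ (and $\psi_{A(j)}(y)$ means $\psi_{A(j)}$ evaluated at the image of $y$ in $A(j)(i)$).
   Context: A locale $L$ is a complete lattice in which finite meets distribute over arbitrary joins, with Grothendieck topology: $\{b_j\le a\}$ covers $a$ iff $\bigvee_j b_j=a$. $L$ is an interval if it is totally ordered and densely ordered. $i$ is the bottom element of $L$; $L_{+}=L\sqcup\{0\}$ with a new bottom $0<i$. $\mathbf{Mon}(L_{+})$ is the category of sheaves $F$ on $L_{+}$ with $F(b)\to F(a)$ injective for all $a\le b$ in $L$; regard $F(c)\subseteq F(i)$ for $c\in L$, and define $\psi_F:F(i)\to L$ by $\psi_F(x)=\sup\{b\in L: x\in F(b)\}$. For a presheaf $E$ on $L_{+}$, $\operatorname{Im}(E)(s)$ is the image of $E(s)\to E(i)$ for $s\in L$, $\operatorname{Im}(E)(0)=\ast$. For a presheaf $F$ on $L_{+}$, $LF(a)=\varprojlim_{0<b<a}F(b)$ for $a\in L$, $a\neq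 i$, $LF(i)=F(i)$, $LF(0)=\ast$. *)

(* Defs.v *)
From Stdlib Require Import Classical ClassicalEpsilon Relations.Relation_Operators.

Set Implicit Arguments.
Unset Strict Implicit.

Record IntervalLocale := {
  car :> Type;
  le : car -> car -> Prop;
  le_refl : forall a, le a a;
  le_trans : forall a b c, le a b -> le b c -> le a c;
  le_antisym : forall a b, le a b -> le b a -> a = b;
  sup : (car -> Prop) -> car;
  sup_ub : forall (P : car -> Prop) x, P x -> le x (sup P);
  sup_least : forall (P : car -> Prop) y, (forall x, P x -> le x y) -> le (sup P) y;
  (* frame law: binary meets distribute over arbitrary joins *)
  distr : forall a (P : car -> Prop),
      sup (fun c => le c a /\ le c (sup P)) =
      sup (fun c => exists b, P b /\ c = sup (fun d => le d a /\ le d b));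
  le_total : forall a b, le a b \/ le b a;
  dense : forall a b, le a b -> a <> b ->
      exists c, (le a c /\ a <> c) /\ (le c b /\ c <> b)
}.

Section Basics.
Variable L : IntervalLocale.

Definition lt (a b : L) : Prop := le a b /\ a <> b.

Definition bot : L := sup (fun _ => False).

Lemma leBot (b : L) : le bot b.
Proof. apply sup_least. intros x [] . Qed.

(* L_+ = option L, with None the new bottom 0 *)
Definition leP (a b : option L) : Prop :=
  match a, b with
  | None, _ => True
  | Some _, None => False
  | Some a, Some b => le a b
  end.

Lemma lt_bot (b : L) : b <> bot -> lt bot b.
Proof. intro nb. split; [apply leBot | intro e; apply nb; symmetry; exact e]. Qed.

Lemma lt_le_trans (c a b : L) : lt c a -> le a b -> lt c b.
Proof.
  intros [h1 h2] h. split; [eapply le_trans; eauto|].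
  intro e; subst c. apply h2. apply le_antisym; assumption.
Qed.

Lemma le_bot_contra (a b : L) : le a b -> b = bot -> a <> bot -> False.
Proof.
  intros h eb na. subst b. apply na. apply le_antisym; [exact h | apply leBot].
Qed.

Record RawPsh := {
  sec : option L -> Type;
  res : forall a b, leP a b -> sec b -> sec a
}.
Arguments sec : clear implicits.
Arguments res : clear implicits.

Definition isPresheaf (F : RawPsh) : Prop :=
  (forall a (h : leP a a) (x : sec F a), res F a a h x = x) /\
  (forall a b c (hab : leP a b) (hbc : leP b c) (hac : leP a c) (x : sec F c),
      res F a b hab (res F b c hbc x) = res F a c hac x).

(* sheaf condition for the topology: {b_k <= a} covers a iff \/ b_k = a in L_+ *)
Definition isSheaf (F : RawPsh) : Prop :=
  forall (a : option L) (I : Type) (b : I -> option L) (hb : forall k, leP (b k) a),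
    (forall u, (forall k, leP (b k) u) -> leP a u) ->
    forall s : forall k, sec F (b k),
      (forall k l c (h1 : leP c (b k)) (h2 : leP c (b l)),
          res F c (b k) h1 (s k) = res F c (b l) h2 (s l)) ->
      exists x : sec F a,
        (forall k, res F (b k) a (hb k) x = s k) /\
        (forall x', (forall k, res F (b k) a (hb k) x' = s k) -> x' = x).

Definition isMon (F : RawPsh) : Prop :=
  isPresheaf F /\ isSheaf F /\
  (forall (a b : L) (h : leP (Some a) (Some b)) (x y : sec F (Some b)),
      res F (Some a) (Some b) h x = res F (Some a) (Some b) h y -> x = y).

Record MonSheaf := { raw :> RawPsh; raw_mon : isMon raw }.

Definition isNat (F G : RawPsh) (m : forall a, sec F a -> sec G a) : Prop :=
  forall a b (h : leP a b) (x : sec F b), m a (res F a b h x) = res G a b h (m b x).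

(* psi_F(x) = sup { b in L | x in F(b) }, with F(b) viewed inside F(i) *)
Definition psi (F : RawPsh) (x : sec F (Some bot)) : L :=
  sup (fun b => exists y : sec F (Some b), res F (Some bot) (Some b) (leBot b) y = x).

End Basics.
Arguments sec {L} r _.
Arguments res {L} r a b _ _.
Arguments isNat {L F G} m.
Arguments psi {L F} x.

Arguments bot {L}.

Record Cat := {
  ob : Type;
  hom : ob -> ob -> Type;
  idm : forall j, hom j j;
  cmp : forall j k l, hom k l -> hom j k -> hom j l;
  cmp_idl : forall j k (f : hom j k), cmp (idm k) f = f;
  cmp_idr : forall j k (f : hom j k), cmp f (idm j) = f;
  cmp_assoc : forall j k l m (f : hom j k) (g : hom k l) (h : hom l m),
      cmp h (cmp g f) = cmp (cmp h g) f
}.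
Arguments hom : clear implicits.
Arguments idm : clear implicits.
Arguments cmp {c j k l} _ _.

Record Diagram (L : IntervalLocale) (J : Cat) := {
  Aob : ob J -> MonSheaf L;
  Amap : forall j k, hom J j k -> forall a, sec (Aob j) a -> sec (Aob k) a;
  Amap_nat : forall j k (f : hom J j k), isNat (@Amap j k f);
  Amap_id : forall j a x, @Amap j j (idm J j) a x = x;
  Amap_comp : forall j k l (f : hom J j k) (g : hom J k l) a x,
      @Amap j l (cmp g f) a x = @Amap k l g a (@Amap j k f a x)
}.
Arguments Aob {L J} d j.
Arguments Amap {L J} d {j k} f a _.

Section Colim.
Variables (L : IntervalLocale) (J : Cat) (A : Diagram L J).

(* colimit in presheaves at s in L: classes of (j, y), y in A(j)(s) *)
Definition Elt (s : L) : Type := { j : ob J & sec (Aob A j) (Some s) }.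

Definition cstep (s : L) (z w : Elt s) : Prop :=
  exists f : hom J (projT1 z) (projT1 w),
    projT2 w = Amap A f (Some s) (projT2 z).

Definition crel (s : L) : Elt s -> Elt s -> Prop := clos_refl_sym_trans _ (@cstep s).

(* elements of (colim_j A(j))(s): equivalence classes *)
Definition Eel (s : L) : Type :=
  { P : Elt s -> Prop | exists z, forall w, P w <-> crel z w }.

Definition toI (s : L) (z : Elt s) : Elt bot :=
  existT _ (projT1 z) (res (Aob A (projT1 z)) (Some bot) (Some s) (leBot s) (projT2 z)).

(* Im(E)(s): the image of E(s) -> E(i), a subset of E(i) *)
Definition ImE (s : L) (c : Eel bot) : Prop :=
  exists z : Elt s, forall w, proj1_sig c w <-> crel (toI z) w.

Definition ImSec (s : L) : Type := { c : Eel bot | ImE s c }.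

(* L(Im E)(a) for a <> i: limit over 0 < b < a of Im(E)(b) (restrictions are inclusions) *)
Definition LimSec (a : L) : Type :=
  { f : forall b, lt b a -> ImSec b |
    forall b b' (hb : lt b a) (hb' : lt b' a), le b' b ->
      proj1_sig (f b' hb') = proj1_sig (f b hb) }.

(* X = L(Im(colim A)); X(0) = *, X(i) = Im(E)(i), X(a) = LimSec a otherwise *)
Definition Xsec (o : option L) : Type :=
  match o with
  | None => unit
  | Some a => ({ _ : a = bot & ImSec bot } + { _ : a <> bot & LimSec a })%type
  end.

Definition atBot (b : L) (x : Xsec (Some b)) : ImSec bot :=
  match x with
  | inl (existT _ _ c) => c
  | inr (existT _ nb f) => proj1_sig f bot (lt_bot nb)
  end.

Definition Xval (x : Xsec (Some bot)) : Eel bot := proj1_sig (atBot x).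

Definition mkLim (a : L) (g : forall b, lt b a -> ImSec b)
  (pf : forall b b' (hb : lt b a) (hb' : lt b' a), le b' b ->
      proj1_sig (g b' hb') = proj1_sig (g b hb)) : LimSec a := exist _ g pf.

Definition restrLim (a b : L) (h : le a b) (na : a <> bot) (x : Xsec (Some b)) : LimSec a :=
  match x with
  | inl (existT _ eb _) => False_rect _ (le_bot_contra h eb na)
  | inr (existT _ _ f) =>
      @mkLim a (fun b' (hb' : lt b' a) => proj1_sig f b' (lt_le_trans hb' h))
        (fun b1 b2 (h1 : lt b1 a) (h2 : lt b2 a) hle =>
           proj2_sig f b1 b2 (lt_le_trans h1 h) (lt_le_trans h2 h) hle)
  end.

Definition Xres (a b : option L) : leP a b -> Xsec b -> Xsec a :=
  match a as a0 return leP a0 b -> Xsec b -> Xsec a0 with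
  | None => fun _ _ => tt
  | Some a =>
      match b as b0 return leP (Some a) b0 -> Xsec b0 -> Xsec (Some a) with
      | None => fun h _ => False_rect _ h
      | Some b => fun h x =>
          match excluded_middle_informative (a = bot) with
          | left ea => inl (existT _ ea (atBot x))
          | right na => inr (existT _ na (restrLim h na x))
          end
      end
  end.

Definition Xraw : RawPsh L := {| sec := Xsec; res := Xres |}.

Definition cls (j : ob J) (a : L) (y : sec (Aob A j) (Some a)) : Eel bot :=
  let z := toI (existT _ j y : Elt a) in
  exist _ (crel z) (ex_intro (fun z' => forall w, crel z w <-> crel z' w) z (fun w => iff_refl _)).

Lemma im_cls (j : ob J) (a : L) (y : sec (Aob A j) (Some a)) (b' : L) (h : le b' a) :
  ImE b' (cls y).
Proof.
  exists (existT _ j (res (Aob A j) (Some b') (Some a) h y) : Elt b').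
  intro w. unfold cls, toI; simpl.
  destruct (raw_mon (Aob A j)) as [[_ Hc] _].
  rewrite (Hc (Some bot) (Some b') (Some a) (leBot b') h (leBot a) y).
  tauto.
Qed.

Definition iota (j : ob J) (o : option L) : sec (Aob A j) o -> sec Xraw o :=
  match o as o0 return sec (Aob A j) o0 -> sec Xraw o0 with
  | None => fun _ => tt
  | Some a => fun y =>
      match excluded_middle_informative (a = bot) with
      | left ea => inl (existT _ ea (exist _ (cls y) (im_cls y (leBot a))))
      | right na => inr (existT _ na
          (@mkLim a (fun b' (hb' : lt b' a) => exist _ (cls y) (im_cls y (proj1 hb')))
                   (fun _ _ _ _ _ => eq_refl)))
      end
  end.

End Colim.
Arguments Xraw {L J} A.
Arguments iota {L J} A j o _.
Arguments cls {L J A j a} y.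
Arguments Xval {L J A} x.

(* Main.v *)
Require Import Defs.
From Stdlib Require Import Classical ClassicalEpsilon ProofIrrelevance FunctionalExtensionality PropExtensionality Relations.Relation_Operators.
Set Implicit Arguments.
Unset Strict Implicit.

Lemma sig_eq {T : Type} {P : T -> Prop} (a b : {x | P x}) : proj1_sig a = proj1_sig b -> a = b.
Proof. destruct a as [a pa], b as [b pb]; simpl; intros ->; f_equal; apply proof_irrelevance. Qed.

Definition classAt {L J} {A : Diagram L J} {b : L} (x : Xsec A (Some b)) : Eel A bot :=
  proj1_sig (atBot x).

Lemma Xsec_ext L J (A : Diagram L J) b (x y : Xsec A (Some b)) :
  classAt x = classAt y -> x = y.
Proof.
  destruct x as [[e1 c1]|[n1 f1]], y as [[e2 c2]|[n2 f2]]; unfold classAt; simpl; intro H.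
  - assert (e1 = e2) by apply proof_irrelevance. subst e2. f_equal. f_equal. apply sig_eq. exact H.
  - exfalso; exact (n2 e1).
  - exfalso; exact (n1 e2).
  - assert (n1 = n2) by apply proof_irrelevance. subst n2. f_equal. f_equal.
    apply sig_eq. apply functional_extensionality_dep; intro b'.
    apply functional_extensionality_dep; intro hb. apply sig_eq.
    rewrite <- (proj2_sig f1 b' bot hb (lt_bot n1) (leBot b')).
    rewrite <- (proj2_sig f2 b' bot hb (lt_bot n1) (leBot b')).
    exact H.
Qed.

Lemma classAt_Xres L J (A : Diagram L J) a b (h : leP (Some a) (Some b)) (x : Xsec A (Some b)) :
  classAt (@Xres _ _ A (Some a) (Some b) h x) = classAt x.
Proof.
  unfold Xres. destruct (excluded_middle_informative (a = bot)) as [ea|na].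
  - reflexivity.
  - unfold classAt; simpl. destruct x as [[eb c]|[nb f]].
    + exfalso. exact (le_bot_contra h eb na).
    + simpl. apply f_equal. apply f_equal. apply proof_irrelevance.
Qed.

Lemma classAt_iota L J (A : Diagram L J) j a (y : sec (Aob A j) (Some a)) :
  classAt (iota A j (Some a) y) = cls y.
Proof.
  unfold iota. destruct (excluded_middle_informative (a = bot)); reflexivity.
Qed.

Lemma ImE_of L J (A : Diagram L J) e (x : Xsec A (Some e)) b' :
  lt b' e -> ImE b' (classAt x).
Proof.
  intro hb. destruct x as [[ee c]|[ne f]].
  - exfalso. destruct hb as [h1 h2]. apply h2. subst e. apply le_antisym; [exact h1|apply leBot].
  - unfold classAt; simpl.
    rewrite (proj2_sig f b' bot hb (lt_bot ne) (leBot b')).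
    exact (proj2_sig (proj1_sig f b' hb)).
Qed.

Lemma toI_res L J (A : Diagram L J) j a b (h : le a b) (y : sec (Aob A j) (Some b)) :
  toI (existT _ j (res (Aob A j) (Some a) (Some b) h y) : Elt A a) = toI (existT _ j y : Elt A b).
Proof.
  unfold toI; simpl. f_equal.
  destruct (raw_mon (Aob A j)) as [[_ Hc] _]. apply Hc.
Qed.

Lemma toI_bot L J (A : Diagram L J) (z : Elt A bot) : toI z = z.
Proof.
  destruct z as [j y]. unfold toI; simpl. f_equal.
  destruct (raw_mon (Aob A j)) as [[Hi _] _]. apply Hi.
Qed.

Lemma crel_sym L J (A : Diagram L J) s (z w : Elt A s) : crel z w -> crel w z.
Proof. intro; apply rst_sym; assumption. Qed.
Lemma crel_trans L J (A : Diagram L J) s (z w v : Elt A s) : crel z w -> crel w v -> crel z v.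
Proof. intros; eapply rst_trans; eassumption. Qed.

Lemma eel_rel L J (A : Diagram L J) s (c : Eel A s) z w :
  proj1_sig c z -> proj1_sig c w -> crel z w.
Proof.
  destruct c as [P [z0 Hz0]]; simpl; intros Hz Hw.
  apply Hz0 in Hz; apply Hz0 in Hw. eapply crel_trans; [apply crel_sym; exact Hz| exact Hw].
Qed.

Lemma eel_rep L J (A : Diagram L J) s (c : Eel A s) : exists z, proj1_sig c z.
Proof. destruct c as [P [z0 Hz0]]; simpl. exists z0. apply Hz0. apply rst_refl. Qed.

Lemma eel_iff L J (A : Diagram L J) s (c : Eel A s) z :
  proj1_sig c z -> forall w, proj1_sig c w <-> crel z w.
Proof.
  intros Hz w. destruct c as [P [z0 Hz0]]; simpl in *. split; intro H.
  - apply eel_rel with (c := exist _ P (ex_intro _ z0 Hz0)); assumption.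
  - apply Hz0. apply Hz0 in Hz. eapply crel_trans; eassumption.
Qed.

Lemma cls_of L J (A : Diagram L J) (c : Eel A bot) (z : Elt A bot) :
  proj1_sig c z -> c = cls (projT2 z).
Proof.
  intro Hz. apply sig_eq. simpl. apply functional_extensionality; intro w.
  apply propositional_extensionality.
  destruct z as [j y]; simpl.
  rewrite toI_bot. apply eel_iff; assumption.
Qed.

Lemma cls_eq_iff L J (A : Diagram L J) j a (y : sec (Aob A j) (Some a)) (c : Eel A bot) :
  (forall w, proj1_sig c w <-> crel (toI (existT _ j y : Elt A a)) w) -> cls y = c.
Proof.
  intro H. apply sig_eq. simpl. apply functional_extensionality; intro w.
  apply propositional_extensionality. split; intro; apply H; assumption.
Qed.

Lemma ImE_bot L J (A : Diagram L J) (c : Eel A bot) : ImE bot c.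
Proof.
  destruct (eel_rep c) as [z Hz]. exists z. rewrite toI_bot. apply eel_iff; assumption.
Qed.

Lemma ImE_down L J (A : Diagram L J) b b' (c : Eel A bot) : le b' b -> ImE b c -> ImE b' c.
Proof.
  intros h [z Hz]. destruct z as [j y].
  exists (existT _ j (res (Aob A j) (Some b') (Some b) h y) : Elt A b').
  rewrite toI_res. exact Hz.
Qed.

Lemma mkX L J (A : Diagram L J) a (c : Eel A bot) :
  (a <> bot -> forall b, lt b a -> ImE b c) -> exists x : Xsec A (Some a), classAt x = c.
Proof.
  intro H. destruct (excluded_middle_informative (a = bot)) as [ea|na].
  - exists (inl (existT _ ea (exist _ c (ImE_bot c)))). reflexivity.
  - exists (inr (existT _ na (@mkLim _ _ A a (fun b hb => exist _ c (H na b hb)) (fun _ _ _ _ _ => eq_refl)))).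
    reflexivity.
Qed.

Definition classO {L J} {A : Diagram L J} (o : option L) : Xsec A o -> option (Eel A bot) :=
  match o as o0 return Xsec A o0 -> option (Eel A bot) with
  | None => fun _ => None
  | Some a => fun x => Some (classAt x)
  end.

Lemma Xsec_eqO L J (A : Diagram L J) o (x y : Xsec A o) : classO x = classO y -> x = y.
Proof.
  destruct o as [a|]; simpl.
  - intro H; injection H; apply Xsec_ext.
  - intros _; destruct x, y; reflexivity.
Qed.

Lemma classO_res L J (A : Diagram L J) o a (h : leP o (Some a)) (x : Xsec A (Some a)) :
  o <> None -> classO (@Xres _ _ A o (Some a) h x) = Some (classAt x).
Proof.
  destruct o as [e|]; intro hn.
  - simpl. f_equal. apply classAt_Xres.
  - exfalso; apply hn; reflexivity.
Qed.

Lemma classO_res2 L J (A : Diagram L J) a o (h : leP (Some a) o) (x : Xsec A o) :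
  classO (@Xres _ _ A (Some a) o h x) = classO x.
Proof.
  destruct o as [e|]; [|destruct h]. simpl. f_equal. apply classAt_Xres.
Qed.

Lemma leP_bot (L : IntervalLocale) (o : option L) : o <> None -> leP (Some bot) o.
Proof. destruct o; simpl; intro h; [apply leBot| apply h; reflexivity]. Qed.

Lemma X_presheaf L J (A : Diagram L J) : isPresheaf (Xraw A).
Proof.
  split.
  - intros a h x. simpl in *. apply Xsec_eqO. destruct a as [a|].
    + rewrite classO_res by discriminate. reflexivity.
    + destruct x; reflexivity.
  - intros a b c hab hbc hac x. simpl in *. destruct a as [a|].
    + destruct b as [b|]; [|destruct hab].
      destruct c as [c|]; [|destruct hbc].
      apply Xsec_ext. rewrite !classAt_Xres. reflexivity.
    + reflexivity.
Qed.

Lemma X_mono L J (A : Diagram L J) : forall (a b : L) (h : leP (Some a) (Some b)) (x y : sec (Xraw A) (Some b)),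
      res (Xraw A) (Some a) (Some b) h x = res (Xraw A) (Some a) (Some b) h y -> x = y.
Proof.
  intros a b h x y H.
  change (@Xres _ _ A (Some a) (Some b) h x = @Xres _ _ A (Some a) (Some b) h y) in H.
  apply Xsec_ext.
  rewrite <- (classAt_Xres h x), <- (classAt_Xres h y), H. reflexivity.
Qed.

Lemma ImE_of_O L J (A : Diagram L J) o (x : Xsec A o) b' c :
  classO x = Some c -> ~ leP o (Some b') -> ImE b' c.
Proof.
  destruct o as [e|]; simpl; intros H hn.
  - injection H as <-. apply ImE_of. destruct (le_total e b') as [h|h]; [contradiction|].
    split; [exact h|]. intro ee; subst; apply hn; apply le_refl.
  - exfalso; apply hn; exact I.
Qed.

Lemma classO_some L J (A : Diagram L J) o (x : Xsec A o) : o <> None -> exists c, classO x = Some c.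
Proof. destruct o; simpl; intro h; [eexists; reflexivity| exfalso; apply h; reflexivity]. Qed.

Lemma X_sheaf L J (A : Diagram L J) : isSheaf (Xraw A).
Proof.
  intros a Ix b hb Hcov s Hcomp.
  destruct a as [a|].
  -
    assert (Hk0 : exists k0, b k0 <> None).
    { apply NNPP; intro Hn. assert (leP (Some a) None) as F.
      { apply Hcov. intro k. destruct (b k) as [e|] eqn:E; [|exact I].
        exfalso; apply Hn; exists k; rewrite E; discriminate. }
      exact F. }
    destruct Hk0 as [k0 Hk0].
    assert (HS : forall k, b k <> None -> classO (s k) = classO (s k0)).
    { intros k hk. specialize (Hcomp k k0 (Some bot) (leP_bot hk) (leP_bot Hk0)).
      rewrite <- (classO_res2 (leP_bot hk) (s k)), <- (classO_res2 (leP_bot Hk0) (s k0)).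
      f_equal. exact Hcomp. }
    destruct (classO_some (s k0) Hk0) as [c Hc].
    assert (Himg: a <> bot -> forall b', lt b' a -> ImE b' c).
    { intros na b' hb'. assert (exists k, ~ leP (b k) (Some b')) as [k hk].
      { apply NNPP; intro Hn. assert (F: leP (Some a) (Some b')).
        { apply Hcov. intro k. apply NNPP; intro; apply Hn; exists k; assumption. }
        simpl in F. destruct hb' as [h1 h2]. apply h2. apply le_antisym; assumption. }
      assert (hkN : b k <> None). { intro E. rewrite E in hk. apply hk. exact I. }
      apply (ImE_of_O (x:=s k) (b':=b')); [|exact hk]. rewrite HS by exact hkN. exact Hc. }
    destruct (mkX Himg) as [x Hx].
    exists x. split.
    + intro k. assert (G: forall o (h : leP o (Some a)) (y : Xsec A o),
          (o <> None -> classO y = Some c) -> @Xres _ _ A o (Some a) h x = y).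
      { intros o h y Hy. apply Xsec_eqO. destruct o as [e|]; [|reflexivity].
        rewrite classO_res by discriminate. rewrite Hx. symmetry; apply Hy; discriminate. }
      apply G. intro hk. rewrite HS by assumption. exact Hc.
    + intros x' Hx'. apply Xsec_ext. rewrite Hx. specialize (Hx' k0).
      assert (E : classO (@Xres _ _ A (b k0) (Some a) (hb k0) x') = classO (s k0)) by (f_equal; exact Hx').
      rewrite classO_res in E by exact Hk0. rewrite Hc in E. injection E; auto.
  - exists tt. split.
    + intro k. generalize (hb k) (s k). destruct (b k) as [e|]; intros h sk.
      * destruct h.
      * destruct sk; reflexivity.
    + intros x' _; destruct x'; reflexivity.
Qed.

Lemma X_mon L J (A : Diagram L J) : isMon (Xraw A).
Proof. split; [apply X_presheaf| split; [apply X_sheaf| apply X_mono]]. Qed.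

Lemma cls_res L J (A : Diagram L J) j a b (h : le a b) (y : sec (Aob A j) (Some b)) :
  cls (res (Aob A j) (Some a) (Some b) h y) = cls y.
Proof.
  apply cls_eq_iff. intro w. simpl. rewrite toI_res. tauto.
Qed.

Lemma iota_nat L J (A : Diagram L J) j : isNat (iota A j).
Proof.
  intros a b h y. destruct a as [a|]; [|reflexivity].
  destruct b as [b|]; [|destruct h].
  apply Xsec_ext. change (classAt (iota A j (Some a) (res (Aob A j) (Some a) (Some b) h y)) =
     classAt (@Xres _ _ A (Some a) (Some b) h (iota A j (Some b) y))).
  rewrite classAt_Xres, !classAt_iota. apply cls_res.
Qed.

Lemma iota_cocone L J (A : Diagram L J) j k (f : hom J j k) a (y : sec (Aob A j) a) :
  iota A k a (Amap A f a y) = iota A j a y.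
Proof.
  destruct a as [a|]; [|reflexivity].
  apply Xsec_ext. rewrite !classAt_iota. apply cls_eq_iff. intro w. simpl.
  assert (Hs : crel (toI (existT _ j y : Elt A a)) (toI (existT _ k (Amap A f (Some a) y) : Elt A a))).
  { apply rst_step. exists f. simpl. symmetry. apply (Amap_nat f (a:=Some bot) (b:=Some a) (leBot a) y). }
  split; intro H.
  - eapply crel_trans; [apply crel_sym; exact Hs| exact H].
  - eapply crel_trans; [exact Hs| exact H].
Qed.

Lemma G_none (L : IntervalLocale) (G : MonSheaf L) (x y : sec G None) : x = y.
Proof.
  destruct (raw_mon G) as [_ [Hs _]].
  destruct (Hs None False (fun k => match k with end) (fun k => match k with end)
     (fun u _ => I) (fun k => match k with end) (fun k => match k with end)) as [x0 [_ Hu]].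
  rewrite (Hu x (fun k => match k with end)), (Hu y (fun k => match k with end)). reflexivity.
Qed.

Lemma G_none_ex (L : IntervalLocale) (G : MonSheaf L) : inhabited (sec G None).
Proof.
  destruct (raw_mon G) as [_ [Hs _]].
  destruct (Hs None False (fun k => match k with end) (fun k => match k with end)
     (fun u _ => I) (fun k => match k with end) (fun k => match k with end)) as [x0 _].
  exact (inhabits x0).
Qed.

Lemma g_crel L J (A : Diagram L J) (G : MonSheaf L) (g : forall j a, sec (Aob A j) a -> sec G a)
  (Hc : forall j k (f : hom J j k) a (y : sec (Aob A j) a), g k a (Amap A f a y) = g j a y)
  s (z w : Elt A s) : crel z w -> g (projT1 z) (Some s) (projT2 z) = g (projT1 w) (Some s) (projT2 w).
Proof.
  induction 1 as [z w [f Hf]| z | z w _ IH | z w v _ IH1 _ IH2].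
  - rewrite Hf. symmetry. apply Hc.
  - reflexivity.
  - symmetry; exact IH.
  - rewrite IH1; exact IH2.
Qed.

Definition Pu {L J} (A : Diagram L J) (G : MonSheaf L) (g : forall j a, sec (Aob A j) a -> sec G a)
  (o : option L) : Xsec A o -> sec G o -> Prop :=
  match o as o0 return Xsec A o0 -> sec G o0 -> Prop with
  | None => fun _ _ => True
  | Some a => fun x w => forall z : Elt A bot, proj1_sig (classAt x) z ->
      res G (Some bot) (Some a) (leBot a) w = g (projT1 z) (Some bot) (projT2 z)
  end.
Arguments Pu {L J} A G g o _ _.

Lemma Pu_unique L J (A : Diagram L J) (G : MonSheaf L) g o (x : Xsec A o) (w1 w2 : sec G o) :
  Pu A G g o x w1 -> Pu A G g o x w2 -> w1 = w2.
Proof.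
  destruct o as [a|]; simpl; intros H1 H2.
  - destruct (eel_rep (classAt x)) as [z Hz].
    destruct (raw_mon G) as [_ [_ Hm]]. apply (Hm bot a (leBot a)).
    rewrite (H1 z Hz), (H2 z Hz). reflexivity.
  - apply G_none.
Qed.

Lemma G_res_id (L : IntervalLocale) (G : MonSheaf L) a (h : leP a a) (x : sec G a) : res G a a h x = x.
Proof. destruct (raw_mon G) as [[Hi _] _]. apply Hi. Qed.

Lemma G_res_comp (L : IntervalLocale) (G : MonSheaf L) a b c (hab : leP a b) (hbc : leP b c) (hac : leP a c) x :
  res G a b hab (res G b c hbc x) = res G a c hac x.
Proof. destruct (raw_mon G) as [[_ Hc] _]. apply Hc. Qed.

Lemma Pu_exists L J (A : Diagram L J) (G : MonSheaf L) (g : forall j a, sec (Aob A j) a -> sec G a)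
  (Hg : forall j, isNat (g j))
  (Hc : forall j k (f : hom J j k) a (y : sec (Aob A j) a), g k a (Amap A f a y) = g j a y)
  o (x : Xsec A o) : exists w, Pu A G g o x w.
Proof.
  destruct o as [a|].
  2:{ destruct (G_none_ex G) as [w]. exists w. exact I. }
  simpl. set (c := classAt x).
  destruct (excluded_middle_informative (a = bot)) as [ea|na].
  - subst a. destruct (eel_rep c) as [z0 Hz0].
    exists (g (projT1 z0) (Some bot) (projT2 z0)). intros z Hz.
    rewrite G_res_id. apply (g_crel Hc). apply (eel_rel Hz0 Hz).
  - assert (HI : forall k : {b | lt b a}, ImE (proj1_sig k) c).
    { intros [b hb]. apply ImE_of. exact hb. }
    set (zf := fun k => proj1_sig (constructive_indefinite_description _ (HI k))).
    assert (Hzf : forall k w, proj1_sig c w <-> crel (toI (zf k)) w).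
    { intro k. exact (proj2_sig (constructive_indefinite_description _ (HI k))). }
    assert (Hzc : forall k, proj1_sig c (toI (zf k))). { intro k. apply (proj2 (Hzf k _)). apply rst_refl. }
    set (s := fun k : {b | lt b a} => g (projT1 (zf k)) (Some (proj1_sig k)) (projT2 (zf k))).
    assert (Hsbot : forall k, res G (Some bot) (Some (proj1_sig k)) (leBot _) (s k) =
                             g (projT1 (toI (zf k))) (Some bot) (projT2 (toI (zf k)))).
    { intro k. unfold s. rewrite <- (Hg _ (Some bot) (Some (proj1_sig k)) (leBot _)). reflexivity. }
    destruct (raw_mon G) as [_ [Hsh Hm]].
    destruct (Hsh (Some a) {b | lt b a} (fun k => Some (proj1_sig k)) (fun k => proj1 (proj2_sig k))) with (s := s)
      as [w [Hw _]].
    + intros u Hu. destruct u as [u|].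
      * apply NNPP; intro nle. simpl in nle.
        destruct (le_total a u) as [h|h]; [contradiction|].
        assert (neq : u <> a). { intro e; subst; apply nle; apply le_refl. }
        destruct (dense h neq) as [d [[h1 h2] [h3 h4]]].
        specialize (Hu (exist _ d (conj h3 h4))). simpl in Hu.
        apply h2. apply le_antisym; assumption.
      * exact (Hu (exist _ bot (lt_bot na))).
    + intros k l c' h1 h2. destruct c' as [e|]; [|apply G_none].
      apply (Hm bot e (leBot e)).
      rewrite (G_res_comp (a:=Some bot) (b:=Some e) (c:=Some (proj1_sig k)) (leBot e) h1 (leBot _)).
      rewrite (G_res_comp (a:=Some bot) (b:=Some e) (c:=Some (proj1_sig l)) (leBot e) h2 (leBot _)).
      rewrite !Hsbot. apply (g_crel Hc). apply (eel_rel (Hzc k) (Hzc l)).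
    + exists w. intros z Hz.
      pose (k0 := exist (fun b => lt b a) bot (lt_bot na)).
      specialize (Hw k0). simpl in Hw.
      transitivity (s k0). { rewrite <- Hw. f_equal. apply proof_irrelevance. }
      assert (E : s k0 = res G (Some bot) (Some (proj1_sig k0)) (leBot _) (s k0)) by (symmetry; apply G_res_id).
      rewrite E, Hsbot. apply (g_crel Hc). apply (eel_rel (Hzc k0) Hz).
Qed.

Lemma X_universal L J (A : Diagram L J) (G : MonSheaf L) (g : forall j a, sec (Aob A j) a -> sec G a)
  (Hg : forall j, isNat (g j))
  (Hc : forall j k (f : hom J j k) a (y : sec (Aob A j) a), g k a (Amap A f a y) = g j a y) :
      exists u : forall a, sec (Xraw A) a -> sec G a,
        isNat u /\
        (forall j a (y : sec (Aob A j) a), u a (iota A j a y) = g j a y) /\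
        (forall u' : forall a, sec (Xraw A) a -> sec G a,
            isNat u' ->
            (forall j a (y : sec (Aob A j) a), u' a (iota A j a y) = g j a y) ->
            forall a x, u' a x = u a x).
Proof.
  set (u := fun a (x : Xsec A a) => proj1_sig (constructive_indefinite_description _ (Pu_exists Hg Hc x))).
  assert (Hu : forall a x, Pu A G g a x (u a x)).
  { intros a x. exact (proj2_sig (constructive_indefinite_description _ (Pu_exists Hg Hc x))). }
  exists u. split; [|split].
  - intros a b h x. apply (Pu_unique (g:=g) (x := @Xres _ _ A a b h x)); [apply Hu|].
    destruct a as [a|]; [|exact I]. destruct b as [b|]; [|destruct h].
    simpl. intros z Hz.
    rewrite (G_res_comp (a:=Some bot) (b:=Some a) (c:=Some b) (leBot a) h (leBot b)).
    apply (Hu (Some b) x z). rewrite <- (classAt_Xres h x). exact Hz.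
  - intros j a y. apply (Pu_unique (g:=g) (x := iota A j a y)); [apply Hu|].
    destruct a as [a|]; [|exact I]. simpl. intros z Hz.
    change (proj1_sig (classAt (iota A j (Some a) y)) z) in Hz. rewrite classAt_iota in Hz.
    rewrite <- (Hg j (Some bot) (Some a) (leBot a)).
    apply (g_crel Hc (z := toI (existT _ j y : Elt A a))). exact Hz.
  - intros u' Hn Hi a x. apply (Pu_unique (g:=g) (x:=x)); [|apply Hu].
    destruct a as [a|]; [|exact I]. simpl. intros z Hz.
    rewrite <- (Hn (Some bot) (Some a) (leBot a)).
    rewrite <- (Hi (projT1 z) (Some bot) (projT2 z)). f_equal.
    apply Xsec_ext. change (classAt (@Xres _ _ A (Some bot) (Some a) (leBot a) x) = classAt (iota A (projT1 z) (Some bot) (projT2 z))).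
    rewrite classAt_Xres, classAt_iota. apply cls_of. exact Hz.
Qed.

Lemma X_psi L J (A : Diagram L J) (x : sec (Xraw A) (Some bot)) :
      psi x =
      sup (fun v => exists (j : ob J) (s : L) (y : sec (Aob A j) (Some s)),
             cls y = Xval x /\
             v = psi (res (Aob A j) (Some bot) (Some s) (leBot s) y)).
Proof.
  set (c := @classAt _ _ A bot x).
  set (T := fun b => ImE b c).
  assert (C1 : psi x = sup T).
  { unfold psi. apply le_antisym.
    - apply sup_least. intros b [y Hy].
      assert (Hyc : classAt y = c).
      { unfold c. rewrite <- Hy. change (classAt y = classAt (@Xres _ _ A (Some bot) (Some b) (leBot b) y)).
        rewrite classAt_Xres. reflexivity. }
      destruct (excluded_middle_informative (b = bot)) as [eb|nb]; [rewrite eb; apply leBot|].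
      apply NNPP; intro nle. destruct (le_total b (sup T)) as [h|h]; [contradiction|].
      assert (neq : sup T <> b). { intro e. apply nle. rewrite e. apply le_refl. }
      destruct (dense h neq) as [d [[h1 h2] [h3 h4]]].
      assert (Td : T d). { unfold T. rewrite <- Hyc. apply ImE_of. split; assumption. }
      apply h2. apply le_antisym; [exact h1| apply sup_ub; exact Td].
    - apply sup_least. intros t Ht. apply sup_ub.
      destruct (mkX (a:=t) (c:=c) (fun _ b' hb => ImE_down (proj1 hb) Ht)) as [y Hy].
      exists y. apply Xsec_ext.
      change (classAt (@Xres _ _ A (Some bot) (Some t) (leBot t) y) = classAt x).
      rewrite classAt_Xres. exact Hy. }
  rewrite C1. apply le_antisym.
  - apply sup_least. intros t [z Hz].
    apply le_trans with (psi (res (Aob A (projT1 z)) (Some bot) (Some t) (leBot t) (projT2 z))).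
    + unfold psi. apply sup_ub. exists (projT2 z). reflexivity.
    + apply sup_ub. exists (projT1 z), t, (projT2 z). split; [|reflexivity].
      apply cls_eq_iff. destruct z as [j y]. exact Hz.
  - apply sup_least. intros v [j [s [y [Hcy ->]]]]. unfold psi. apply sup_least.
    intros b [y' Hy']. apply sup_ub. unfold T.
    exists (existT _ j y' : Elt A b). intro w.
    assert (Hc' : c = cls y) by (symmetry; exact Hcy). rewrite Hc'. simpl.
    unfold toI; simpl. rewrite Hy'. tauto.
Qed.

Theorem lemma28 (L : IntervalLocale) (J : Cat) (A : Diagram L J) :
  (* X = L(Im(colim A)) lies in Mon(L_+) *)
  isMon (Xraw A) /\
  (* the maps iota_j form a cocone *)
  (forall j, isNat (iota A j)) /\
  (forall j k (f : hom J j k) a (y : sec (Aob A j) a),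
      iota A k a (Amap A f a y) = iota A j a y) /\
  (* universal property of the colimit in Mon(L_+) *)
  (forall (G : MonSheaf L) (g : forall j a, sec (Aob A j) a -> sec G a),
      (forall j, isNat (g j)) ->
      (forall j k (f : hom J j k) a (y : sec (Aob A j) a), g k a (Amap A f a y) = g j a y) ->
      exists u : forall a, sec (Xraw A) a -> sec G a,
        isNat u /\
        (forall j a (y : sec (Aob A j) a), u a (iota A j a y) = g j a y) /\
        (forall u' : forall a, sec (Xraw A) a -> sec G a,
            isNat u' ->
            (forall j a (y : sec (Aob A j) a), u' a (iota A j a y) = g j a y) ->
            forall a x, u' a x = u a x)) /\
  (* formula for psi_X *)
  (forall x : sec (Xraw A) (Some bot),
      psi x =
      sup (fun v => exists (j : ob J) (s : L) (y : sec (Aob A j) (Some s)),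
             cls y = Xval x /\
             v = psi (res (Aob A j) (Some bot) (Some s) (leBot s) y))).
Proof.
  split; [apply X_mon|].
  split; [apply iota_nat|].
  split; [intros; apply iota_cocone|].
  split; [intros G g Hg Hc; apply X_universal; assumption|].
  intro x. apply X_psi.
Qed.
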